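(* Let $\mathcal L$ be a recurrent language. Then $\mathcal L$ is eventually dendric if and only if $\mathcal L$ satisfies RBC.
   Context: $\mathcal{A}$ finite alphabet, $\mathcal{A}^*$ nonempty finite words. A language is a set $\mathcal L\subseteq\mathcal A^*$ with $\mathcal A\subseteq\mathcal L$, closed under subwords, and such that each $w\in\mathcal L$ has $a,b\in\mathcal A$ with $awb\in\mathcal L$. $\mathcal L$ is recurrent if for all $u,v\in\mathcal L$ there is $w\in\mathcal L$ with $uwv\in\mathcal L$. $Ex^\ell(w)=\{a: aw\in\mathcal L\}$, $Ex^r(w)=\{b: wb\in\mathcal L\}$, $Ex^{\ell r}(w)=\{(a,b): awb\in\mathcal L\}$. The extension graph $\mathscr E(w)$ is the bipartite graph whose vertex set is the disjoint union of $Ex^\ell(w)$ and $Ex^r(w)$, with an edge between $a$ and $b$ iff $(a,b)\in Ex^{\ell r}(w)$. $\mathcal L$ is eventually dendric if there is $n_0$ such that $\mathscr E(w)$ is a tree for all $w\in\mathcal L$ with $|w|\ge n_0$. Left special: $|Ex^\ell(w)|\ge2$; right special: $|Ex^r(w)|\ge2$; bispecial: both. A bispecial $w$ is regular bispecial if there is exactly one $\hat a\in Ex^\ell(w)$ with $\hat aw$ right special and exactly one $\hat b\in Ex^r(w)$ with $w\hat b$ left special. RBC: there is $n_0$ such that every bispecial word of length $\ge n_0$ is regular bispecial. *)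

(* Defs.v *)
From mathcomp Require Import all_boot.
Set Implicit Arguments. Unset Strict Implicit. Unset Printing Implicit Defensive.

Section Lang.
Variable A : finType.

Definition is_language (L : pred (seq A)) : Prop :=
  [/\ (forall w, L w -> w != [::]),
      (forall a : A, L [:: a]),
      (forall u w, L w -> u != [::] -> infix u w -> L u)
    & (forall w, L w -> exists a b, L (a :: rcons w b))].

Definition recurrent (L : pred (seq A)) : Prop :=
  forall u v, L u -> L v -> exists w, L w /\ L (u ++ w ++ v).

Definition Exl (L : pred (seq A)) (w : seq A) : {set A} := [set a | L (a :: w)].
Definition Exr (L : pred (seq A)) (w : seq A) : {set A} := [set b | L (rcons w b)].
Definition Exlr (L : pred (seq A)) (w : seq A) : {set A * A} :=
  [set ab | L (ab.1 :: rcons w ab.2)].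

Definition ext_vertices (L : pred (seq A)) (w : seq A) : {set A + A} :=
  [set x | match x with inl a => a \in Exl L w | inr b => b \in Exr L w end].

Definition ext_edge (L : pred (seq A)) (w : seq A) : rel (A + A) :=
  fun x y => match x, y with
             | inl a, inr b => (a, b) \in Exlr L w
             | inr b, inl a => (a, b) \in Exlr L w
             | _, _ => false
             end.

Definition graph_connected {T : finType} (V : {set T}) (e : rel T) : Prop :=
  forall u v, u \in V -> v \in V ->
    exists p : seq T, [/\ all (mem V) p, path e u p & last u p = v].

Definition graph_acyclic {T : finType} (V : {set T}) (e : rel T) : Prop :=
  ~ exists c : seq T, [/\ 3 <= size c, uniq c, all (mem V) c & cycle e c].

Definition is_tree {T : finType} (V : {set T}) (e : rel T) : Prop :=
  V != set0 /\ graph_connected V e /\ graph_acyclic V e.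

Definition ext_graph_is_tree (L : pred (seq A)) (w : seq A) : Prop :=
  is_tree (ext_vertices L w) (ext_edge L w).

Definition eventually_dendric (L : pred (seq A)) : Prop :=
  exists n0, forall w, L w -> n0 <= size w -> ext_graph_is_tree L w.

Definition left_special (L : pred (seq A)) (w : seq A) : bool := 2 <= #|Exl L w|.
Definition right_special (L : pred (seq A)) (w : seq A) : bool := 2 <= #|Exr L w|.
Definition bispecial (L : pred (seq A)) (w : seq A) : bool :=
  [&& L w, left_special L w & right_special L w].

Definition regular_bispecial (L : pred (seq A)) (w : seq A) : Prop :=
  bispecial L w /\
  (exists! a, a \in Exl L w /\ right_special L (a :: w)) /\
  (exists! b, b \in Exr L w /\ left_special L (rcons w b)).

Definition RBC (L : pred (seq A)) : Prop :=
  exists n0, forall w, bispecial L w -> n0 <= size w -> regular_bispecial L w.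

End Lang.

(* Main.v *)
Require Import Defs.
From mathcomp Require Import all_boot zify.
From Stdlib Require Import Classical.
Set Implicit Arguments. Unset Strict Implicit. Unset Printing Implicit Defensive.


Lemma lang_ne (A : finType) (L : pred (seq A)) : is_language L -> forall w, L w -> w != [::].
Proof. by case. Qed.

Lemma lang_fac (A : finType) (L : pred (seq A)) : is_language L ->
  forall u w, L w -> u != [::] -> infix u w -> L u.
Proof. by case. Qed.

Lemma lang_cons (A : finType) (L : pred (seq A)) : is_language L ->
  forall a w, L (a :: w) -> w != [::] -> L w.
Proof. move=> hL a w h ne; apply: (lang_fac hL h ne); exact: infix_cons. Qed.

Lemma lang_rcons (A : finType) (L : pred (seq A)) : is_language L ->
  forall w b, L (rcons w b) -> w != [::] -> L w.
Proof. move=> hL w b h ne; apply: (lang_fac hL h ne); exact: infix_rcons. Qed.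

Lemma lang_lr_l (A : finType) (L : pred (seq A)) : is_language L ->
  forall a w b, L (a :: rcons w b) -> L (a :: w).
Proof.
move=> hL a w b h; apply: (lang_fac hL h) => //.
by rewrite -rcons_cons infix_rcons.
Qed.

Lemma lang_lr_r (A : finType) (L : pred (seq A)) : is_language L ->
  forall a w b, L (a :: rcons w b) -> L (rcons w b).
Proof.
move=> hL a w b h; apply: (lang_fac hL h); first by case: w {h}.
exact: infix_cons.
Qed.

Lemma Exr_pos (A : finType) (L : pred (seq A)) : is_language L ->
  forall w, L w -> 0 < #|Exr L w|.
Proof.
move=> hL w Lw; case: (hL) => _ _ _ /(_ w Lw) [a [b h]].
apply/card_gt0P; exists b; rewrite inE; exact: lang_lr_r h.
Qed.

Lemma Exl_pos (A : finType) (L : pred (seq A)) : is_language L ->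
  forall w, L w -> 0 < #|Exl L w|.
Proof.
move=> hL w Lw; case: (hL) => _ _ _ /(_ w Lw) [a [b h]].
apply/card_gt0P; exists a; rewrite inE; exact: lang_lr_l h.
Qed.


Lemma mk_cycle (T : finType) (V : {set T}) (e : rel T) u y v :
  sorted e (u ++ y :: v) -> uniq (u ++ y :: v) -> all (mem V) (u ++ y :: v) ->
  e (last y v) y -> 2 <= size v -> ~ graph_acyclic V e.
Proof.
move=> so un al ez sz; apply; exists (y :: v); split => //.
- by rewrite cat_uniq in un; case/and3P: un.
- by rewrite all_cat in al; case/andP: al.
- rewrite /cycle rcons_path ez andbT.
  by apply: (infix_sorted (suffix_infix u (y :: v))) so.
Qed.

Lemma two_nbrs_cycle (T : finType) (V : {set T}) (e : rel T) q z y1 y2 :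
  irreflexive e -> graph_acyclic V e ->
  sorted e (rcons q z) -> uniq (rcons q z) -> all (mem V) (rcons q z) ->
  y1 \in rcons q z -> y2 \in rcons q z -> y1 != y2 -> e z y1 -> e z y2 -> False.
Proof.
move=> irr ac so un al h1 h2 ne e1 e2.
have nz1 : y1 != z by apply/eqP => E; rewrite E irr in e1.
have nz2 : y2 != z by apply/eqP => E; rewrite E irr in e2.
move: h1; rewrite mem_rcons inE (negPf nz1) /= => h1.
move: h2; rewrite mem_rcons inE (negPf nz2) /= => h2.
case/splitPr: h1 so un al h2 => q1 q2.
rewrite rcons_cat rcons_cons => so un al h2.
case: q2 so un al h2 => [|w q2] so un al h2.
- have ne' : y2 != y1 by rewrite eq_sym.
  rewrite mem_cat inE (negPf ne') orbF in h2.
  case/splitPr: h2 so un al => r1 r2; rewrite -catA /= => so un al.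
  apply: (mk_cycle so un al _ _ ac).
    by rewrite last_cat /=.
  by rewrite size_cat /= addnS addnS.
- apply: (mk_cycle so un al _ _ ac).
    by rewrite last_rcons.
  by rewrite size_rcons.
Qed.

Definition is_leaf (T : finType) (V : {set T}) (e : rel T) (v : T) : bool :=
  [forall y, forall z, ((y \in V) && (z \in V) && e v y && e v z) ==> (y == z)].

Lemma long_path (T : finType) (V : {set T}) (e : rel T) :
  irreflexive e -> graph_acyclic V e ->
  (forall v, v \in V -> ~~ is_leaf V e v) -> forall x, x \in V ->
  forall k, exists q z, [/\ size q = k, sorted e (rcons q z), uniq (rcons q z) & all (mem V) (rcons q z)].
Proof.
move=> irr ac nl x xV; elim=> [|k [q [z [sz so un al]]]].
  by exists [::], x; rewrite /= xV.
have zV : z \in V by move/allP: al; apply; rewrite mem_rcons inE eqxx.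
have := nl z zV; rewrite /is_leaf negb_forall => /existsP [y1].
rewrite negb_forall => /existsP [y2]; rewrite negb_imply => /andP [/andP [/andP [/andP [y1V y2V] e1] e2] ne].
have ext : forall y, y \in V -> e z y -> y \notin rcons q z ->
   exists q' z', [/\ size q' = k.+1, sorted e (rcons q' z'), uniq (rcons q' z') & all (mem V) (rcons q' z')].
  move=> y yV ey ny; exists (rcons q z), y; split.
  - by rewrite size_rcons sz.
  - case: q so {sz un al ny} => [|a q] so /=; first by rewrite ey.
    by move: so => /= so; rewrite rcons_path so last_rcons.
  - by rewrite rcons_uniq ny un.
  - by rewrite -cats1 all_cat al /= yV.
case h1: (y1 \in rcons q z); last by apply: ext y1 y1V e1 (negbT h1).
case h2: (y2 \in rcons q z); last by apply: ext y2 y2V e2 (negbT h2).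
by case: (two_nbrs_cycle irr ac so un al h1 h2 ne e1 e2).
Qed.

Lemma leaf_exists (T : finType) (V : {set T}) (e : rel T) :
  irreflexive e -> graph_acyclic V e -> V != set0 -> exists2 v, v \in V & is_leaf V e v.
Proof.
move=> irr ac /set0Pn [x xV].
case: (boolP [exists v in V, is_leaf V e v]) => [/existsP [v /andP [vV lv]]|nl].
  by exists v.
have nl' : forall v, v \in V -> ~~ is_leaf V e v.
  by move=> v vV; apply/negP => lv; move/negP: nl; apply; apply/existsP; exists v; rewrite vV.
have [q [z [sz so un al]]] := long_path irr ac nl' xV #|V|.
have sub : {subset rcons q z <= enum V}.
  by move=> y yq; rewrite mem_enum; move/allP: al; apply.
have := uniq_leq_size un sub.
by rewrite size_rcons sz -cardE ltnn.
Qed.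


Definition bedge (A : finType) (D : {set A * A}) : rel (A + A) :=
  fun x y => match x, y with
             | inl a, inr b => (a, b) \in D
             | inr b, inl a => (a, b) \in D
             | _, _ => false
             end.

Definition bverts (A : finType) (X Y : {set A}) : {set A + A} :=
  [set x | match x with inl a => a \in X | inr b => b \in Y end].

Lemma bedge_irr (A : finType) (D : {set A * A}) : irreflexive (bedge D).
Proof. by case. Qed.

Lemma acyclic_sub (T : finType) (V V' : {set T}) (e e' : rel T) :
  V' \subset V -> subrel e' e -> graph_acyclic V e -> graph_acyclic V' e'.
Proof.
move=> sV se ac [c [sz un al cy]]; apply: ac; exists c; split => //.
  by apply/allP => x xc; move/allP: al => /(_ x xc); apply: (subsetP sV).
exact: (sub_cycle se).
Qed.

Lemma forest_bound (A : finType) n : forall (X Y : {set A}) (D : {set A * A}),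
  #|X| + #|Y| = n -> {subset D <= setX X Y} ->
  graph_acyclic (bverts X Y) (bedge D) -> 0 < n -> #|D| < n.
Proof.
elim: n => [//|n IH] X Y D card sub ac _.
have ne : bverts X Y != set0.
  apply/set0Pn; move: card; case: (set_0Vmem X) => [->|[a aX]].
    case: (set_0Vmem Y) => [->|[b bY] _]; first by rewrite !cards0.
    by exists (inr b); rewrite inE.
  by exists (inl a); rewrite inE.
have [v vV lv] := leaf_exists (@bedge_irr A D) ac ne.
have lf : forall y z, y \in bverts X Y -> z \in bverts X Y -> bedge D v y -> bedge D v z -> y = z.
  by move=> y z yV zV ey ez; move: lv => /forallP /(_ y) /forallP /(_ z); rewrite yV zV ey ez /= => /eqP.
case: v vV lf {lv} => [a|b]; rewrite inE => vV lf.
- pose D' := D :&: [set p | p.1 != a].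
  pose Da := D :\: [set p | p.1 != a].
  have cD : #|D| = #|D'| + #|Da| by rewrite cardsID.
  have cDa : #|Da| <= 1.
    apply/card_le1_eqP => [[a1 b1]] [a2 b2]; rewrite !inE /= !negbK.
    case/andP => /eqP -> h1 /andP [/eqP -> h2].
    have := sub _ h1; rewrite inE /= => /andP [_ b1Y].
    have := sub _ h2; rewrite inE /= => /andP [_ b2Y].
    have := lf (inr b1) (inr b2); rewrite !inE => /(_ b1Y b2Y h1 h2) [->] //.
  have cX : #|X| = (#|X :\ a|).+1 by rewrite (cardsD1 a) vV.
  case: (posnP (#|X :\ a| + #|Y|)) => [z|pos].
    have Y0 : Y = set0 by apply/eqP; rewrite -cards_eq0; move/eqP: z; rewrite addn_eq0 => /andP [_].
    have -> : #|D| = 0.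
      apply/eqP; rewrite cards_eq0; apply/eqP/setP => p; rewrite inE.
      by apply/negP => /sub; rewrite inE Y0 inE andbF.
    by [].
  have := IH (X :\ a) Y D'.
  have h1 : #|X :\ a| + #|Y| = n by move: card; rewrite cX addSn => [[]].
  have h2 : {subset D' <= setX (X :\ a) Y}.
    move=> [a1 b1]; rewrite !inE /= => /andP [/sub]; rewrite inE /= => /andP [-> ->] ->.
    by [].
  have h3 : graph_acyclic (bverts (X :\ a) Y) (bedge D').
    apply: acyclic_sub ac.
      by apply/subsetP => [[x|x]]; rewrite !inE // => /andP [_ ->].
    by move=> [x|x] [y|y] //=; rewrite !inE => /andP [].
  move/(_ h1 h2 h3); rewrite -h1 => /(_ pos) => lt.
  by rewrite cD; apply: (leq_ltn_trans (leq_add (leqnn _) cDa)); rewrite addn1 ltnS.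
- pose D' := D :&: [set p | p.2 != b].
  pose Db := D :\: [set p | p.2 != b].
  have cD : #|D| = #|D'| + #|Db| by rewrite cardsID.
  have cDb : #|Db| <= 1.
    apply/card_le1_eqP => [[a1 b1]] [a2 b2]; rewrite !inE /= !negbK.
    case/andP => /eqP -> h1 /andP [/eqP -> h2].
    have := sub _ h1; rewrite inE /= => /andP [b1X _].
    have := sub _ h2; rewrite inE /= => /andP [b2X _].
    have := lf (inl a1) (inl a2); rewrite !inE => /(_ b1X b2X h1 h2) [->] //.
  have cY : #|Y| = (#|Y :\ b|).+1 by rewrite (cardsD1 b) vV.
  case: (posnP (#|X| + #|Y :\ b|)) => [z|pos].
    have X0 : X = set0 by apply/eqP; rewrite -cards_eq0; move/eqP: z; rewrite addn_eq0 => /andP [].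
    have -> : #|D| = 0.
      apply/eqP; rewrite cards_eq0; apply/eqP/setP => p; rewrite inE.
      by apply/negP => /sub; rewrite inE X0 inE.
    by [].
  have := IH X (Y :\ b) D'.
  have h1 : #|X| + #|Y :\ b| = n by move: card; rewrite cY addnS => [[]].
  have h2 : {subset D' <= setX X (Y :\ b)}.
    move=> [a1 b1]; rewrite !inE /= => /andP [/sub]; rewrite inE /= => /andP [-> ->] ->.
    by [].
  have h3 : graph_acyclic (bverts X (Y :\ b)) (bedge D').
    apply: acyclic_sub ac.
      by apply/subsetP => [[x|x]]; rewrite !inE // => /andP [_ ->].
    by move=> [x|x] [y|y] //=; rewrite !inE => /andP [].
  move/(_ h1 h2 h3); rewrite -h1 => /(_ pos) => lt.
  by rewrite cD; apply: (leq_ltn_trans (leq_add (leqnn _) cDb)); rewrite addn1 ltnS.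
Qed.


Lemma acyclic_small (T : finType) (V : {set T}) (e : rel T) (S : {set T}) :
  (forall x y z, e y x -> e x z -> y != z -> x \in S) -> #|S| <= 2 -> graph_acyclic V e.
Proof.
move=> hS cS [c [sz un al cy]].
have cS' : {subset c <= enum S}.
  move=> x xc; rewrite mem_enum.
  case/rot_to: xc cy un sz => i s' E.
  rewrite -(rot_cycle i) -(rot_uniq i) -(size_rot i) E.
  case: s' E => [|y [|w t]] E //= cy un sz.
  move: cy; rewrite /= rcons_path /= => /and4P [exy _ _ ez].
  apply: (hS x (last w t) y ez exy).
  apply/eqP => E2; move: un => /and4P [_ + _ _].
  by rewrite -E2 mem_last.
have := uniq_leq_size un cS'; rewrite -cardE => h.
by have := leq_trans sz (leq_trans h cS).
Qed.


Fixpoint wl (A : finType) (n : nat) : seq (seq A) :=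
  if n is n'.+1 then [seq a :: w | a <- enum A, w <- wl A n'] else [:: [::]].

Lemma mem_wl (A : finType) n (w : seq A) : (w \in wl A n) = (size w == n).
Proof.
elim: n w => [|n IH] [|a w] //=.
  by apply/allpairsP => [[[b v] /= [_ _]]].
apply/allpairsP/idP => [[[b v] /= [_ vn [_ ->]]]|sz].
  by rewrite eqSS -IH.
by exists (a, w); rewrite /= mem_enum IH.
Qed.

Lemma wl_uniq (A : finType) n : uniq (wl A n).
Proof.
elim: n => [|n IH] //=; apply: allpairs_uniq => //; first exact: enum_uniq.
by move=> [a1 w1] [a2 w2] _ _ /= [-> ->].
Qed.

Definition Ln (A : finType) (L : pred (seq A)) n := [seq w <- wl A n | L w].

Lemma mem_Ln (A : finType) (L : pred (seq A)) n w : (w \in Ln L n) = L w && (size w == n).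
Proof. by rewrite mem_filter mem_wl. Qed.

Lemma Ln_uniq (A : finType) (L : pred (seq A)) n : uniq (Ln L n).
Proof. exact/filter_uniq/wl_uniq. Qed.

Lemma sum_left (A : finType) (L : pred (seq A)) : is_language L ->
  forall n (F : seq A -> nat), 0 < n ->
  \sum_(x <- Ln L n.+1) F x = \sum_(w <- Ln L n) \sum_(a in Exl L w) F (a :: w).
Proof.
move=> hL n F n0.
have pe : perm_eq (Ln L n.+1) [seq a :: w | w <- Ln L n, a <- enum (Exl L w)].
  apply: uniq_perm; first exact: Ln_uniq.
    apply: allpairs_uniq_dep; first exact: Ln_uniq.
      by move=> w _; exact: enum_uniq.
    by move=> [w1 a1] [w2 a2] _ _ /= [E1 E2]; subst.
  move=> x; rewrite mem_Ln; apply/idP/allpairsPdep.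
    case: x => [|a w] /= /andP [Lx sz]; first by [].
    exists w, a; rewrite mem_Ln mem_enum inE Lx; split => //.
    apply/andP; split => //; apply: (lang_cons hL Lx).
    by case: w sz {Lx} => //; case: n n0.
  move=> [w [a [wn aX ->]]]; move: wn aX; rewrite mem_Ln mem_enum inE => /andP [_ sz] ->.
  by [].
rewrite (perm_big _ pe) big_allpairs_dep /=.
by apply: eq_bigr => w _; rewrite big_enum.
Qed.

Lemma sum_right (A : finType) (L : pred (seq A)) : is_language L ->
  forall n (F : seq A -> nat), 0 < n ->
  \sum_(x <- Ln L n.+1) F x = \sum_(w <- Ln L n) \sum_(b in Exr L w) F (rcons w b).
Proof.
move=> hL n F n0.
have pe : perm_eq (Ln L n.+1) [seq rcons w b | w <- Ln L n, b <- enum (Exr L w)].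
  apply: uniq_perm; first exact: Ln_uniq.
    apply: allpairs_uniq_dep; first exact: Ln_uniq.
      by move=> w _; exact: enum_uniq.
    by move=> [w1 a1] [w2 a2] _ _ /= /rcons_inj [E1 E2]; subst.
  move=> x; rewrite mem_Ln; apply/idP/allpairsPdep.
    case/lastP: x => [|w b] /= /andP [Lx sz]; first by [].
    exists w, b; rewrite mem_Ln mem_enum inE Lx; split => //.
    rewrite size_rcons eqSS in sz.
    apply/andP; split => //; apply: (lang_rcons hL Lx).
    by case: w sz {Lx} => //; case: n n0.
  move=> [w [a [wn aX ->]]]; move: wn aX; rewrite mem_Ln mem_enum inE => /andP [_ sz] ->.
  by rewrite size_rcons.
rewrite (perm_big _ pe) big_allpairs_dep /=.
by apply: eq_bigr => w _; rewrite big_enum.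
Qed.

Lemma card_pairs (A : finType) (D : {set A * A}) :
  #|D| = \sum_(a : A) #|[set b | (a, b) \in D]|.
Proof.
have h : forall (T : finType) (S : {set T}), #|S| = \sum_(x : T) (x \in S : nat).
  by move=> T S; rewrite -sum1_card big_mkcond; apply: eq_bigr => x _; case: (x \in S).
rewrite h; symmetry; under eq_bigr => a _ do rewrite h; symmetry.
rewrite pair_big /=; apply: eq_bigr => [[a b]] _ /=; by rewrite inE.
Qed.

Lemma e_left (A : finType) (L : pred (seq A)) : is_language L ->
  forall w, #|Exlr L w| = \sum_(a in Exl L w) #|Exr L (a :: w)|.
Proof.
move=> hL w; rewrite card_pairs [RHS]big_mkcond /=; apply: eq_bigr => a _.
case: ifP => aX.
  by apply: eq_card => b; rewrite !inE.
apply/eqP; rewrite cards_eq0; apply/eqP/setP => b; rewrite !inE.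
apply/negP => h; move/negP: aX; apply; rewrite inE; exact: lang_lr_l h.
Qed.

Lemma card_pairs2 (A : finType) (D : {set A * A}) :
  #|D| = \sum_(b : A) #|[set a | (a, b) \in D]|.
Proof.
have h : forall (T : finType) (S : {set T}), #|S| = \sum_(x : T) (x \in S : nat).
  by move=> T S; rewrite -sum1_card big_mkcond; apply: eq_bigr => x _; case: (x \in S).
rewrite h; symmetry; under eq_bigr => a _ do rewrite h; symmetry.
rewrite pair_big /= (reindex (fun p : A * A => (p.2, p.1))) /=; last first.
  by exists (fun p : A * A => (p.2, p.1)) => [[]|[]].
apply: eq_bigr => [[a b]] _ /=; by rewrite inE.
Qed.

Lemma e_right (A : finType) (L : pred (seq A)) : is_language L ->
  forall w, #|Exlr L w| = \sum_(b in Exr L w) #|Exl L (rcons w b)|.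
Proof.
move=> hL w; rewrite card_pairs2 [RHS]big_mkcond /=; apply: eq_bigr => b _.
case: ifP => bX.
  by apply: eq_card => a; rewrite !inE.
apply/eqP; rewrite cards_eq0; apply/eqP/setP => a; rewrite !inE.
apply/negP => h; move/negP: bX; apply; rewrite inE; exact: lang_lr_r h.
Qed.


Lemma mono_le (f : nat -> nat) N : (forall n, N <= n -> f n.+1 <= f n) ->
  forall n, N <= n -> f n <= f N.
Proof.
move=> h n; elim: n => [|n IH] le; first by have -> : N = 0 by lia.
case: (ltnP N n.+1) => c; last by have -> : N = n.+1 by lia.
exact: leq_trans (h n (ltnSE c)) (IH (ltnSE c)).
Qed.

Lemma ev_const (f : nat -> nat) N : (forall n, N <= n -> f n.+1 <= f n) ->
  exists M, N <= M /\ forall n, M <= n -> f n = f M.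
Proof.
move=> h; move: {2}(f N) (leqnn (f N)) => k; elim: k N h => [|k IH] N h fk.
  exists N; split => // n Nn; have := mono_le h Nn; lia.
case: (classic (forall n, N <= n -> f n = f N)) => [H|H]; first by exists N.
have [n Hn] := not_all_ex_not _ _ H.
have Nn : N <= n.
  case: (boolP (N <= n)) => // c; exfalso; apply: Hn => c'; by rewrite c' in c.
have ne : f n <> f N by move=> E; apply: Hn.
have fn := mono_le h Nn.
have [M [nM HM]] := IH n (fun m nm => h m (leq_trans Nn nm)) ltac:(lia).
exists M; split => //; lia.
Qed.

Lemma sum_eq_le (I : eqType) (s : seq I) (f g : I -> nat) :
  (forall x, x \in s -> f x <= g x) -> \sum_(x <- s) f x = \sum_(x <- s) g x ->
  forall x, x \in s -> f x = g x.
Proof.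
elim: s => [//|y s IH] le; rewrite !big_cons => E x.
have l1 := le y (mem_head _ _).
have le' : forall x, x \in s -> f x <= g x by move=> z zs; apply: le; rewrite inE zs orbT.
have l2 : \sum_(x <- s) f x <= \sum_(x <- s) g x.
  by rewrite big_seq_cond [X in _ <= X]big_seq_cond; apply: leq_sum => z /andP [zs _]; apply: le'.
rewrite inE => /orP [/eqP ->|xs]; first lia.
apply: IH => //; lia.
Qed.

Definition pc (A : finType) (L : pred (seq A)) n := size (Ln L n).

Lemma sumLl (A : finType) (L : pred (seq A)) : is_language L -> forall n, 0 < n ->
  \sum_(w <- Ln L n) #|Exl L w| = pc L n.+1.
Proof.
move=> hL n n0; rewrite /pc -sum1_size (sum_left hL (fun _ => 1) n0).
by apply: eq_bigr => w _; rewrite sum1_card.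
Qed.

Lemma sumLr (A : finType) (L : pred (seq A)) : is_language L -> forall n, 0 < n ->
  \sum_(w <- Ln L n) #|Exr L w| = pc L n.+1.
Proof.
move=> hL n n0; rewrite /pc -sum1_size (sum_right hL (fun _ => 1) n0).
by apply: eq_bigr => w _; rewrite sum1_card.
Qed.

Lemma sumLe (A : finType) (L : pred (seq A)) : is_language L -> forall n, 0 < n ->
  \sum_(w <- Ln L n) #|Exlr L w| = pc L n.+2.
Proof.
move=> hL n n0; rewrite -sumLr // (sum_left hL (fun x => #|Exr L x|) n0).
by apply: eq_bigr => w _; rewrite e_left.
Qed.

Lemma stepA (A : finType) (L : pred (seq A)) : is_language L -> forall N, 0 < N ->
  (forall w, L w -> N <= size w -> (#|Exlr L w|).+1 <= #|Exl L w| + #|Exr L w|) ->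
  (forall n, N <= n -> pc L n.+2 - pc L n.+1 <= pc L n.+1 - pc L n) /\
  (forall n, N <= n -> pc L n <= pc L n.+1) /\
  exists M, N <= M /\ forall w, L w -> M <= size w -> (#|Exlr L w|).+1 = #|Exl L w| + #|Exr L w|.
Proof.
move=> hL N N0 hm.
have inL : forall n w, w \in Ln L n -> L w /\ size w = n.
  by move=> n w; rewrite mem_Ln => /andP [-> /eqP].
have key : forall n, N <= n -> pc L n.+2 + pc L n <= 2 * pc L n.+1.
  move=> n Nn; have n0 : 0 < n by lia.
  rewrite -sumLe // /pc -sum1_size -big_split /= mul2n -addnn.
  have E1 := sumLl hL n0; have E2 := sumLr hL n0; rewrite /pc in E1 E2.
  rewrite -{1}E1 -E2 -big_split /=.
  rewrite big_seq_cond [X in _ <= X]big_seq_cond; apply: leq_sum => w /andP [wn _].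
  have [Lw sz] := inL _ _ wn; rewrite addn1; apply: hm => //; by rewrite sz.
have mon : forall n, N <= n -> pc L n <= pc L n.+1.
  move=> n Nn; have n0 : 0 < n by lia.
  rewrite -(sumLr hL n0) /pc -sum1_size big_seq_cond [X in _ <= X]big_seq_cond.
  apply: leq_sum => w /andP [wn _]; have [Lw _] := inL _ _ wn; exact: Exr_pos.
have dec : forall n, N <= n -> pc L n.+2 - pc L n.+1 <= pc L n.+1 - pc L n.
  move=> n Nn; have := key n Nn; have := mon n Nn; have := mon n.+1 (leqW Nn); lia.
split => //; split => //.
have [M [NM HM]] := ev_const dec.
exists M; split => // w Lw Mw.
set n := size w.
have n0 : 0 < n by lia.
have eq : \sum_(w <- Ln L n) (#|Exlr L w| + 1) = \sum_(w <- Ln L n) (#|Exl L w| + #|Exr L w|).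
  rewrite !big_split /= sumLe // sumLl // sumLr // sum1_size -/(pc L n).
  have := HM n Mw; have := HM n.+1 (leqW Mw); have := mon n (leq_trans NM Mw);
  have := mon n.+1 (leqW (leq_trans NM Mw)); lia.
have le : forall x, x \in Ln L n -> #|Exlr L x| + 1 <= #|Exl L x| + #|Exr L x|.
  move=> x xn; have [Lx sz] := inL _ _ xn; rewrite addn1; apply: hm => //; rewrite sz; lia.
have H := sum_eq_le le eq; rewrite -addn1; apply: H.
by rewrite mem_Ln Lw eqxx.
Qed.


Lemma sum_ind_card (T : finType) (S : {set T}) (P : pred T) :
  \sum_(a in S) (P a : nat) = #|[set a in S | P a]|.
Proof.
rewrite -sum1dep_card big_mkcondr /=; apply: eq_bigr => a _; by case: (P a).
Qed.

Lemma stepB (A : finType) (L : pred (seq A)) (X Y : seq A -> {set A})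
  (ext : A -> seq A -> seq A) (N : nat) :
  (forall n (F : seq A -> nat), N <= n ->
     \sum_(x <- Ln L n.+1) F x = \sum_(w <- Ln L n) \sum_(a in X w) F (ext a w)) ->
  (forall n, N <= n -> \sum_(w <- Ln L n) #|Y w| = pc L n.+1) ->
  (forall n, N <= n -> pc L n.+2 - pc L n.+1 <= pc L n.+1 - pc L n) ->
  (forall w, L w -> 0 < #|Y w|) ->
  (forall w, L w -> N <= size w -> (\sum_(a in X w) #|Y (ext a w)|).+1 = #|X w| + #|Y w|) ->
  exists M, forall w, L w -> M <= size w -> 2 <= #|Y w| ->
     exists! a, a \in X w /\ 2 <= #|Y (ext a w)|.
Proof.
move=> HW HY Hdec Hpos Heq.
have inL : forall n w, w \in Ln L n -> L w /\ size w = n.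
  by move=> n w; rewrite mem_Ln => /andP [-> /eqP].
pose t n := \sum_(w <- Ln L n) (2 <= #|Y w| : nat).
pose g w := \sum_(a in X w) (2 <= #|Y (ext a w)| : nat).
have tS : forall n, N <= n -> t n.+1 = \sum_(w <- Ln L n) g w.
  by move=> n Nn; rewrite /t (HW n (fun x => (2 <= #|Y x| : nat)) Nn).
have gle : forall n w, N <= n -> w \in Ln L n -> (2 <= #|Y w| : nat) <= g w.
  move=> n w Nn wn; have [Lw sz] := inL _ _ wn.
  case: (leqP 2 #|Y w|) => // h2; rewrite lt0n; apply/negP => /eqP g0.
  have all1 : forall a, a \in X w -> #|Y (ext a w)| <= 1.
    move=> a aX; move/eqP: g0; rewrite /g sum_nat_eq0 => /forallP /(_ a).
    by rewrite aX /= eqb0 -ltnNge ltnS.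
  have : \sum_(a in X w) #|Y (ext a w)| <= \sum_(a in X w) 1 by apply: leq_sum.
  rewrite sum1_card; have := Heq w Lw ltac:(by rewrite sz); lia.
have tmon : forall n, N <= n -> t n <= t n.+1.
  move=> n Nn; rewrite tS // /t big_seq_cond [X in _ <= X]big_seq_cond.
  by apply: leq_sum => w /andP [wn _]; apply: gle wn.
have tle : forall n, N <= n -> t n + pc L n <= pc L n.+1.
  move=> n Nn; rewrite -HY // /pc -sum1_size -big_split /=.
  rewrite big_seq_cond [X in _ <= X]big_seq_cond; apply: leq_sum => w /andP [wn _].
  have [Lw _] := inL _ _ wn; have := Hpos w Lw; case: (leqP 2 #|Y w|) => /= h; lia.
pose B := pc L N.+1 - pc L N.
have tB : forall n, N <= n -> t n <= B.
  move=> n Nn; have := tle n Nn; have := mono_le Hdec Nn; rewrite /B; lia.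
have [M [NM HM]] := ev_const (f := fun n => B - t n) (N := N)
  ltac:(by move=> n Nn; have := tmon n Nn; have := tB n.+1 (leqW Nn); lia).
exists M => w Lw Mw h2.
set n := size w.
have Nn : N <= n by lia.
have tc : t n.+1 = t n.
  have := HM n Mw; have := HM n.+1 (leqW Mw); have := tB n Nn; have := tB n.+1 (leqW Nn);
  have := tmon n Nn; lia.
have E : \sum_(w <- Ln L n) (2 <= #|Y w| : nat) = \sum_(w <- Ln L n) g w.
  by rewrite -tS.
have wn : w \in Ln L n by rewrite mem_Ln Lw eqxx.
have := sum_eq_le (fun x xn => gle n x Nn xn) E wn.
rewrite h2 /g sum_ind_card => /esym/eqP/cards1P [a0 Ha0].
exists a0; split.
  have : a0 \in [set a in X w | 2 <= #|Y (ext a w)|] by rewrite Ha0 inE.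
  by rewrite inE => /andP [-> ->].
move=> a [aX aY].
have : a \in [set a in X w | 2 <= #|Y (ext a w)|] by rewrite inE aX aY.
by rewrite Ha0 inE => /eqP.
Qed.


Lemma dstar_tree (A : finType) (X Y : {set A}) (D : {set A * A}) ah bh :
  ah \in X -> bh \in Y -> {subset D <= setX X Y} ->
  (forall b, b \in Y -> (ah, b) \in D) -> (forall a, a \in X -> (a, bh) \in D) ->
  (forall a b1 b2, (a, b1) \in D -> (a, b2) \in D -> b1 != b2 -> a = ah) ->
  (forall b a1 a2, (a1, b) \in D -> (a2, b) \in D -> a1 != a2 -> b = bh) ->
  is_tree (bverts X Y) (bedge D).
Proof.
move=> ahX bhY sub hb ha dA dB; split; last split.
- by apply/set0Pn; exists (inl ah); rewrite inE.
- move=> [a|b] [a'|b']; rewrite !inE => u v.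
  + by exists [:: inr bh; inl a']; rewrite /= !inE bhY v (ha _ u) (ha _ v).
  + by exists [:: inr bh; inl ah; inr b']; rewrite /= !inE bhY ahX v (ha _ u) (ha _ ahX) (hb _ v).
  + by exists [:: inl ah; inr bh; inl a']; rewrite /= !inE bhY ahX v (hb _ u) (ha _ ahX) (ha _ v).
  + by exists [:: inl ah; inr b']; rewrite /= !inE ahX v (hb _ u) (hb _ v).
- apply: (acyclic_small (S := [set inl ah; inr bh])); last by rewrite cards2.
  move=> [a|b] [y|y] [z|z] //= e1 e2 ne; rewrite !inE.
    by rewrite (dA a y z e1 e2 ne) eqxx.
  by rewrite (dB b y z e1 e2 ne) eqxx orbT.
Qed.

Lemma reg_bound (A : finType) (X : {set A}) (Y : A -> {set A}) (Yw : {set A}) ah :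
  ah \in X -> (forall a, 2 <= #|Y a| -> a \in X -> a = ah) ->
  \sum_(a in X) #|Y a| <= #|Y ah| + (#|X| - 1).
Proof.
move=> ahX hu; rewrite (bigD1 ah) //= leq_add2l.
have -> : #|X| - 1 = \sum_(a | (a \in X) && (a != ah)) 1.
  rewrite sum1dep_card (cardsD1 ah X) ahX add1n subn1 /=.
  by apply: eq_card => x; rewrite !inE andbC.
rewrite big_mkcond [X in _ <= X]big_mkcond /=; apply: leq_sum => a _.
case: ifP => // /andP [aX ne]; case: (leqP 2 #|Y a|) => h; last by [].
by move/eqP: ne; rewrite (hu a h aX).
Qed.

Lemma small_bound (A : finType) (X : {set A}) (Y : A -> {set A}) (Yw : {set A}) :
  (forall a, a \in X -> Y a \subset Yw) -> #|X| <= 1 ->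
  \sum_(a in X) #|Y a| <= #|Yw|.
Proof.
move=> sub h; apply: (leq_trans (n := \sum_(a in X) #|Yw|)).
  by apply: leq_sum => a aX; apply: subset_leq_card; apply: sub.
rewrite sum_nat_const; case: #|X| h => [|[|]] //=; lia.
Qed.


Lemma exr_sub (A : finType) (L : pred (seq A)) : is_language L ->
  forall a w, Exr L (a :: w) \subset Exr L w.
Proof. move=> hL a w; apply/subsetP => b; rewrite !inE => h; exact: (@lang_lr_r _ _ hL a w b h). Qed.

Lemma exl_sub (A : finType) (L : pred (seq A)) : is_language L ->
  forall w b, Exl L (rcons w b) \subset Exl L w.
Proof. move=> hL w b; apply/subsetP => a; rewrite !inE => h; exact: (@lang_lr_l _ _ hL a w b h). Qed.

Lemma exlr_sub (A : finType) (L : pred (seq A)) : is_language L ->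
  forall w, {subset Exlr L w <= setX (Exl L w) (Exr L w)}.
Proof.
move=> hL w [a b]; rewrite !inE /= => h.
by rewrite (lang_lr_l hL h) (lang_lr_r hL h).
Qed.

Lemma ED_RBC (A : finType) (L : pred (seq A)) : is_language L ->
  eventually_dendric L -> RBC L.
Proof.
move=> hL [n0 Hn0].
pose N := maxn n0 1.
have N0 : 0 < N by rewrite leq_max orbT.
have hm : forall w, L w -> N <= size w -> (#|Exlr L w|).+1 <= #|Exl L w| + #|Exr L w|.
  move=> w Lw Nw.
  have [_ [_ ac]] := Hn0 w Lw (leq_trans (leq_maxl _ _) Nw).
  apply: (forest_bound (n := #|Exl L w| + #|Exr L w|)) => //.
    exact: exlr_sub.
  by have := Exl_pos hL Lw; lia.
have [dec [mon [M [NM HM]]]] := stepA hL N0 hm.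
have M0 : 0 < M by lia.
have [M1 H1] := stepB (X := Exl L) (Y := Exr L) (ext := fun a w => a :: w) (N := M)
  (fun n F Mn => sum_left hL F (leq_trans M0 Mn))
  (fun n Mn => sumLr hL (leq_trans M0 Mn))
  (fun n Mn => dec n (leq_trans NM Mn))
  (Exr_pos hL)
  (fun w Lw Mw => etrans (esym (congr1 S (e_left hL w))) (HM w Lw Mw)).
have [M2 H2] := stepB (X := Exr L) (Y := Exl L) (ext := fun b w => rcons w b) (N := M)
  (fun n F Mn => sum_right hL F (leq_trans M0 Mn))
  (fun n Mn => sumLl hL (leq_trans M0 Mn))
  (fun n Mn => dec n (leq_trans NM Mn))
  (Exl_pos hL)
  (fun w Lw Mw => etrans (esym (congr1 S (e_right hL w))) (etrans (HM w Lw Mw) (addnC _ _))).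
exists (maxn M1 M2) => w bs sz.
have bs' := bs; case/and3P: bs' => Lw ls rs.
split => //; split.
  by apply: H1 => //; apply: leq_trans sz; apply: leq_maxl.
by apply: H2 => //; apply: leq_trans sz; apply: leq_maxr.
Qed.


Lemma RBC_ED (A : finType) (L : pred (seq A)) : is_language L ->
  RBC L -> eventually_dendric L.
Proof.
move=> hL [n0 Hn0].
pose N := maxn n0 1.
have N0 : 0 < N by rewrite leq_max orbT.
have reg : forall w, L w -> N <= size w -> 1 < #|Exl L w| -> 1 < #|Exr L w| ->
    regular_bispecial L w.
  move=> w Lw Nw hl hr; apply: Hn0; first by rewrite /bispecial Lw /left_special /right_special hl hr.
  exact: leq_trans (leq_maxl _ _) Nw.
have hm : forall w, L w -> N <= size w -> (#|Exlr L w|).+1 <= #|Exl L w| + #|Exr L w|.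
  move=> w Lw Nw; have lp := Exl_pos hL Lw; have rp := Exr_pos hL Lw.
  case: (leqP #|Exl L w| 1) => hl.
    rewrite (e_left hL); have /= := small_bound (X := Exl L w) (Y := fun a => Exr L (a :: w))
      (fun a _ => exr_sub hL a w) hl; lia.
  case: (leqP #|Exr L w| 1) => hr.
    rewrite (e_right hL); have /= := small_bound (X := Exr L w) (Y := fun b => Exl L (rcons w b))
      (fun b _ => exl_sub hL w b) hr; lia.
  have [_ [[ah [[ahX _] hu]] _]] := reg w Lw Nw hl hr.
  rewrite (e_left hL).
  have /= := reg_bound (Y := fun a => Exr L (a :: w)) (Exr L w) ahX
    (fun a h aX => esym (hu a (conj aX h))).
  have := subset_leq_card (exr_sub hL ah w); lia.
have [dec [mon [M [NM HM]]]] := stepA hL N0 hm.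
exists M => w Lw Mw.
change (is_tree (bverts (Exl L w) (Exr L w)) (bedge (Exlr L w))).
have eq := HM w Lw Mw.
have lp := Exl_pos hL Lw; have rp := Exr_pos hL Lw.
have sub := @exlr_sub _ _ hL w.
have inl_ : forall a b, (a, b) \in Exlr L w -> a \in Exl L w.
  by move=> a b /sub; rewrite inE => /andP [].
have inr_ : forall a b, (a, b) \in Exlr L w -> b \in Exr L w.
  by move=> a b /sub; rewrite inE => /andP [].
have extR : forall b, b \in Exr L w -> exists2 c, c \in Exl L w & (c, b) \in Exlr L w.
  move=> b; rewrite inE => h; case: (hL) => _ _ _ /(_ _ h) [c [d h2]].
  have h3 : L (c :: rcons w b) := @lang_lr_l _ _ hL c (rcons w b) d h2.
  by exists c; rewrite inE //; exact: (@lang_lr_l _ _ hL c w b h3).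
have extL : forall a, a \in Exl L w -> exists2 d, d \in Exr L w & (a, d) \in Exlr L w.
  move=> a; rewrite inE => h; case: (hL) => _ _ _ /(_ _ h) [c [d h2]].
  have h3 : L (a :: rcons w d) := @lang_lr_r _ _ hL c (a :: w) d h2.
  by exists d; rewrite inE //; exact: (@lang_lr_r _ _ hL a w d h3).
case: (leqP #|Exl L w| 1) => hl.
  have [a0 Ea] : exists a0, Exl L w = [set a0] by apply/cards1P; lia.
  have [b0 b0X] : exists b0, b0 \in Exr L w by apply/card_gt0P.
  have ext : forall b, b \in Exr L w -> (a0, b) \in Exlr L w.
    move=> b /extR [c]; rewrite Ea inE => /eqP -> //.
  apply: (dstar_tree (ah := a0) (bh := b0)) => //.
  - by rewrite Ea inE.
  - by move=> a; rewrite Ea inE => /eqP ->; apply: ext.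
  - by move=> a b1 b2 /inl_; rewrite Ea inE => /eqP.
  - move=> b a1 a2 /inl_ + /inl_; rewrite Ea !inE => /eqP -> /eqP ->.
    by rewrite eqxx.
case: (leqP #|Exr L w| 1) => hr.
  have [b0 Eb] : exists b0, Exr L w = [set b0] by apply/cards1P; lia.
  have [a0 a0X] : exists a0, a0 \in Exl L w by apply/card_gt0P.
  have ext : forall a, a \in Exl L w -> (a, b0) \in Exlr L w.
    move=> a /extL [d]; rewrite Eb inE => /eqP -> //.
  apply: (dstar_tree (ah := a0) (bh := b0)) => //.
  - by rewrite Eb inE.
  - by move=> b; rewrite Eb inE => /eqP ->; apply: ext.
  - move=> a b1 b2 /inr_ + /inr_; rewrite Eb !inE => /eqP -> /eqP ->.
    by rewrite eqxx.
  - by move=> b a1 a2 /inr_; rewrite Eb inE => /eqP.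
have Nw : N <= size w by lia.
have [_ [[ah [[ahX _] hu]] [bh [[bhX _] hv]]]] := reg w Lw Nw hl hr.
have hu' : forall a, 2 <= #|Exr L (a :: w)| -> a \in Exl L w -> a = ah.
  by move=> a h aX; apply: esym; apply: hu.
have hv' : forall b, 2 <= #|Exl L (rcons w b)| -> b \in Exr L w -> b = bh.
  by move=> b h bX; apply: esym; apply: hv.
have fullr : Exr L (ah :: w) =i Exr L w.
  apply/subset_cardP; last exact: exr_sub.
  have /= := reg_bound (Y := fun a => Exr L (a :: w)) (Exr L w) ahX hu'.
  rewrite -(e_left hL); have := subset_leq_card (exr_sub hL ah w); lia.
have fulll : Exl L (rcons w bh) =i Exl L w.
  apply/subset_cardP; last exact: exl_sub.
  have /= := reg_bound (Y := fun b => Exl L (rcons w b)) (Exl L w) bhX hv'.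
  rewrite -(e_right hL); have := subset_leq_card (exl_sub hL w bh); lia.
apply: (dstar_tree (ah := ah) (bh := bh)) => //.
- by move=> b; rewrite -fullr !inE.
- by move=> a; rewrite -fulll !inE.
- move=> a b1 b2 h1 h2 ne; apply: hu'; last exact: inl_ h1.
  apply/card_gt1P; exists b1, b2; split => //; [move: h1 | move: h2]; rewrite !inE => h; exact: h.
- move=> b a1 a2 h1 h2 ne; apply: hv'; last exact: inr_ h1.
  apply/card_gt1P; exists a1, a2; split => //; [move: h1 | move: h2]; rewrite !inE => h; exact: h.
Qed.


Theorem mainTheorem4 (A : finType) (L : pred (seq A)) :
  is_language L -> recurrent L -> (eventually_dendric L <-> RBC L).
Proof.
move=> hL _; split; [exact: ED_RBC | exact: RBC_ED].
Qed.
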